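(* Let $G$ be a locally compact Polish group with identity element $\mathbf 1$, and let $\bar{\mathbf 1}$ denote the identity of $G^\omega$. There exists a compact set $K_0\subseteq G^\omega$ with $\bar{\mathbf 1}\in K_0$ such that for each compact $K\subseteq G^\omega$ with $\bar{\mathbf 1}\in K$, there is a continuous group homomorphism $\varphi:G^\omega\to G^\omega$ such that for every group word $w$, $\varphi^{-1}(w[K_0])=w[K]$. In particular, $\langle K_0\rangle$ is a universal compactly generated subgroup of $G^\omega$, i.e., for every compact $K\subseteq G^\omega$ there is a continuous homomorphism $\psi:G^\omega\to G^\omega$ with $\psi^{-1}(\langle K_0\rangle)=\langle K\rangle$.
   Context: $G^\omega$ has the product topology. An $m$-ary group word $w$ is a formal expression combining $m$ symbols using multiplication and inverses (e.g. $b^{-1}ac^{-1}$); it induces a continuous map $G^m\to G$ (and likewise on $G^\omega$). For $A\subseteq G^\omega$, $w[A]=\{w(x_1,\ldots,x_m):x_1,\ldots,x_m\in A\}$, and $\langle A\rangle$ is the subgroup generated by $A$. *)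

(* Defs.v *)
From HB Require Import structures.
From mathcomp Require Import all_boot all_order all_algebra.
From mathcomp Require Import all_classical all_reals topology Rstruct.
Set Implicit Arguments.
Unset Strict Implicit.
Unset Printing Implicit Defensive.
Import Order.TTheory GRing.Theory Num.Theory.
Local Open Scope classical_set_scope.
Local Open Scope ring_scope.

Definition locally_compact_space (T : topologicalType) : Prop :=
  forall x : T, exists K : set T, nbhs x K /\ compact K.

Definition separable_space (T : topologicalType) : Prop :=
  exists D : set T, countable D /\ closure D = setT.

Definition complete_compatible_metric (T : topologicalType)
    (d : T -> T -> Rdefinitions.R) : Prop :=
  [/\ forall x y, 0 <= d x y,
      forall x y, d x y = 0 <-> x = y,
      forall x y, d x y = d y x,
      forall x y z, d x z <= d x y + d y z
    & (forall A : set T, open A <->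
         (forall x, A x -> exists2 e : Rdefinitions.R, 0 < e &
                            [set y | d x y < e] `<=` A))] /\
  (forall u : nat -> T,
         (forall e : Rdefinitions.R, 0 < e -> exists N : nat,
            forall m n : nat, (N <= m)%N -> (N <= n)%N -> d (u m) (u n) < e) ->
         exists x : T, u @ \oo --> x).

Definition completely_metrizable (T : topologicalType) : Prop :=
  exists d : T -> T -> Rdefinitions.R, complete_compatible_metric d.

Definition polish_space (T : topologicalType) : Prop :=
  separable_space T /\ completely_metrizable T.

Definition group_axioms (G : Type) (mul : G -> G -> G) (inv : G -> G)
    (one : G) : Prop :=
  [/\ forall x y z, mul x (mul y z) = mul (mul x y) z,
      forall x, mul one x = x,
      forall x, mul x one = x,
      forall x, mul (inv x) x = one
    & forall x, mul x (inv x) = one].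

Definition topological_group (G : topologicalType) (mul : G -> G -> G)
    (inv : G -> G) (one : G) : Prop :=
  [/\ group_axioms mul inv one,
      continuous (fun p : G * G => mul p.1 p.2)
    & continuous inv].

Definition Gomega (G : topologicalType) := {ptws nat -> G}.

Definition Gw_mul (G : topologicalType) (mul : G -> G -> G)
  (x y : Gomega G) : Gomega G := fun n => mul (x n) (y n).
Definition Gw_inv (G : topologicalType) (inv : G -> G)
  (x : Gomega G) : Gomega G := fun n => inv (x n).
Definition Gw_one (G : topologicalType) (one : G) : Gomega G := fun _ => one.

Inductive gword (m : nat) : Type :=
  | GVar of 'I_m
  | GMul of gword m & gword m
  | GInv of gword m.

Fixpoint weval (T : Type) (mul : T -> T -> T) (inv : T -> T) (m : nat)
    (x : 'I_m -> T) (w : gword m) : T :=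
  match w with
  | GVar i => x i
  | GMul w1 w2 => mul (weval mul inv x w1) (weval mul inv x w2)
  | GInv w1 => inv (weval mul inv x w1)
  end.

Definition wimage (T : Type) (mul : T -> T -> T) (inv : T -> T) (m : nat)
    (w : gword m) (A : set T) : set T :=
  [set y | exists x : 'I_m -> T, (forall i, A (x i)) /\ y = weval mul inv x w].

Definition is_subgroup (T : Type) (mul : T -> T -> T) (inv : T -> T) (one : T)
    (H : set T) : Prop :=
  [/\ H one, forall x y, H x -> H y -> H (mul x y) & forall x, H x -> H (inv x)].

Definition gen_subgroup (T : Type) (mul : T -> T -> T) (inv : T -> T) (one : T)
    (A : set T) : set T :=
  [set x | forall H : set T, is_subgroup mul inv one H -> A `<=` H -> H x].

Definition group_hom (T U : Type) (mulT : T -> T -> T) (mulU : U -> U -> U)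
    (f : T -> U) : Prop :=
  forall x y, f (mulT x y) = mulU (f x) (f y).

(* Main.v *)
Require Import Defs.
From HB Require Import structures.
From mathcomp Require Import all_boot all_order all_algebra.
From mathcomp Require Import all_classical all_reals topology Rstruct.
From mathcomp Require Import lra.
From Stdlib Require Cantor.
From mathcomp Require finmap.
Set Implicit Arguments. Unset Strict Implicit. Unset Printing Implicit Defensive.
Import Order.TTheory GRing.Theory Num.Theory.
Local Open Scope classical_set_scope.
Lemma fip_dec (T : topologicalType) (A : set T) (S : nat -> set T) :
  compact A -> (forall j, closed (S j)) -> (forall j, S j.+1 `<=` S j) ->
  (forall j, A `&` S j !=set0) -> exists p, A p /\ forall j, S j p.
Proof.
move=> cA cS dS ne.
have dec : forall i j, (i <= j)%N -> S j `<=` S i.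
  move=> i j /subnK <-; elim: (j - i)%N => [|n IH]; first by [].
  by rewrite addSn; apply: subset_trans (dS _) IH.
pose F := filter_from setT (fun j => A `&` S j).
have FF : ProperFilter F.
  apply: filter_from_proper; last by move=> i _; exact: ne.
  apply: filter_fromT_filter; first by exists 0%N.
  move=> i j; exists (maxn i j) => x [Ax Sx]; split; split => //.
    by apply: (dec _ (maxn i j)) => //; exact: leq_maxl.
  by apply: (dec _ (maxn i j)) => //; exact: leq_maxr.
have FA : F A by exists 0%N => // x [].
have [p [Ap clp]] := cA F FF FA.
exists p; split => // j; apply: (cS j) => B nB.
by apply: clp => //; exists j => // y [].
Qed.

Lemma cont_into_prod (T : topologicalType) (I : Type) (K : I -> topologicalType)
  (f : T -> prod_topology K) :
  (forall i, continuous (fun x => f x i)) -> continuous f.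
Proof.
move=> fc x; apply/cvg_sup => i A nA.
have [B [[C oC <-] Bfx] sBA] := nA.
have h : nbhs x (fun y => C (f y i)).
  by apply: (fc i x); apply: open_nbhs_nbhs; split.
rewrite nbhs_simpl /=; apply: filterS h => y Cy; exact: sBA.
Qed.

Definition ptd (T : topologicalType) (x : T) : Type := T.
HB.instance Definition _ (T : topologicalType) (x : T) := Topological.copy (ptd x) T.
HB.instance Definition _ (T : topologicalType) (x : T) := isPointed.Build (ptd x) x.

Lemma compact_cover_gen (T : topologicalType) (A : set T) (I : choiceType) (D : set I)
  (f : I -> set T) : compact A -> (forall i, D i -> open (f i)) -> A `<=` cover D f ->
  finite_subset_cover D f A.
Proof.
move=> cA oF sA.
have [->|/set0P[x Ax]] := eqVneq A set0.
  by exists (@finmap.fset0 _) => // ? [].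
have := @compact_cover (ptd x); move=> h.
have cA' : @compact (ptd x) A by [].
move: cA'; rewrite h; apply => //.
Qed.

Fixpoint wmap (m n : nat) (f : 'I_m -> 'I_n) (w : gword m) : gword n :=
  match w with
  | GVar i => GVar (f i)
  | GMul w1 w2 => GMul (wmap f w1) (wmap f w2)
  | GInv w1 => GInv (wmap f w1)
  end.

Lemma weval_wmap (T : Type) (mu : T -> T -> T) (iv : T -> T) m n
  (f : 'I_m -> 'I_n) (x : 'I_n -> T) (w : gword m) :
  weval mu iv x (wmap f w) = weval mu iv (x \o f) w.
Proof. by elim: w => [i|w1 IH1 w2 IH2|w1 IH1] //=; rewrite ?IH1 ?IH2. Qed.

Lemma weval_coord (G : topologicalType) (mul : G -> G -> G) (inv : G -> G)
  m (t : 'I_m -> Gomega G) (w : gword m) (n : nat) :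
  weval (Gw_mul mul) (Gw_inv inv) t w n = weval mul inv (fun i => t i n) w.
Proof.
by elim: w => [i|w1 IH1 w2 IH2|w1 IH1] //=; rewrite /Gw_mul /Gw_inv ?IH1 ?IH2.
Qed.

Section Main.
Variable G : topologicalType.
Variables (mul : G -> G -> G) (inv : G -> G) (one : G).
Hypothesis Hgrp : group_axioms mul inv one.
Hypothesis Hmul : continuous (fun p : G * G => mul p.1 p.2).
Hypothesis Hinv : continuous inv.
Variable d : G -> G -> Rdefinitions.R.
Hypothesis Hd : complete_compatible_metric d.
Hypothesis HLC : locally_compact_space G.
Variable Dn : set G.
Hypothesis Dcount : countable Dn.
Hypothesis Ddense : closure Dn = setT.

Local Notation X := (Gomega G).
Local Open Scope ring_scope.

Lemma mul11 : mul one one = one.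
Proof. by case: Hgrp => _ h _ _ _; rewrite h. Qed.

Lemma inv1 : inv one = one.
Proof. by case: Hgrp => _ h1 _ _ h2; rewrite -[inv one]h1 h2. Qed.

Lemma weval_one m (w : gword m) : weval mul inv (fun _ => one) w = one.
Proof. by elim: w => [i|w1 IH1 w2 IH2|w1 IH1] //=; rewrite ?IH1 ?IH2 ?mul11 ?inv1. Qed.

Let d0 : forall x y, 0 <= d x y. Proof. by case: Hd => -[]. Qed.
Let deq : forall x y, d x y = 0 <-> x = y. Proof. by case: Hd => -[]. Qed.
Let dsym : forall x y, d x y = d y x. Proof. by case: Hd => -[]. Qed.
Let dtri : forall x y z, d x z <= d x y + d y z. Proof. by case: Hd => -[]. Qed.
Let dopen : forall A : set G, open A <->
   (forall x, A x -> exists2 e : Rdefinitions.R, 0 < e & [set y | d x y < e] `<=` A).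
Proof. by case: Hd => -[]. Qed.

Lemma ball_open (c : G) (r : Rdefinitions.R) : open [set y | d c y < r].
Proof.
apply/dopen => y /= cy; exists (r - d c y); first by rewrite subr_gt0.
move=> z /= yz; have := dtri c y z; lra.
Qed.

Lemma cball_closed (c : G) (r : Rdefinitions.R) : closed [set y | d c y <= r].
Proof.
rewrite -openC; apply/dopen => y /= /negP; rewrite -ltNge => cy.
exists (d c y - r); first by rewrite subr_gt0.
move=> z /= yz; apply/negP; rewrite -ltNge; have := dtri c z y; rewrite (dsym z y); lra.
Qed.

Lemma G_hausdorff : hausdorff_space G.
Proof.
rewrite open_hausdorff => x y xy.
have dpos : 0 < d x y.
  rewrite lt_neqAle d0 andbT eq_sym; apply/negP => /eqP /deq /eqP; exact/negP.
exists ([set z | d x z < d x y / 2], [set z | d y z < d x y / 2]).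
  by split; rewrite inE /=; [rewrite (proj2 (deq x x) erefl)|rewrite (proj2 (deq y y) erefl)]; lra.
split; [exact: ball_open|exact: ball_open|].
apply/eqP; rewrite -subset0 => z /= [h1 h2].
have := dtri x z y; rewrite (dsym z y); lra.
Qed.

Lemma nbhs_ball (x : G) (A : set G) : nbhs x A ->
  exists2 e : Rdefinitions.R, 0 < e & [set y | d x y < e] `<=` A.
Proof.
rewrite nbhsE => -[B [oB Bx] sBA].
have [e e0 sB] := (proj1 (dopen B)) oB x Bx.
by exists e => // z /sB /sBA.
Qed.

Lemma ball_nbhs (x : G) (e : Rdefinitions.R) : 0 < e -> nbhs x [set y | d x y < e].
Proof.
move=> e0; apply: open_nbhs_nbhs; split; first exact: ball_open.
by rewrite /= (proj2 (deq x x) erefl).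
Qed.


Let fD_ex := cid (elimT (countable_injP Dn) Dcount).
Let fD : G -> nat := proj1_sig fD_ex.
Let fD_inj : {in Dn &, injective fD}. Proof. exact: (proj2_sig fD_ex). Qed.
Definition enum_D : nat -> G := fun n => xget one [set x | Dn x /\ fD x = n].

Lemma dense_enum (x : G) (rr : Rdefinitions.R) : 0 < rr -> exists a : nat, d x (enum_D a) < rr.
Proof.
move=> r0.
have [y [Dy xy]] : Dn `&` [set y | d x y < rr] !=set0.
  have : closure Dn x by rewrite Ddense.
  by apply; apply: ball_nbhs.
exists (fD y).
have : [set z | Dn z /\ fD z = fD y] (enum_D (fD y)).
  by apply: xgetPex; exists y.
move=> [Dz fz]; have -> : enum_D (fD y) = y by apply: fD_inj; rewrite ?inE.
by [].
Qed.

Definition rad (q : nat) : Rdefinitions.R := ((q.+1)%:R)^-1.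

Lemma rad_gt0 q : 0 < rad q.
Proof. by rewrite /rad invr_gt0 ltr0n. Qed.

Lemma rad_le q q' : (q <= q')%N -> rad q' <= rad q.
Proof.
move=> h; rewrite /rad lef_pV2 ?posrE ?ltr0n // ler_nat ltnS //.
Qed.

Lemma rad_small (e : Rdefinitions.R) : 0 < e -> exists q, rad q < e.
Proof.
move=> e0; have ei : 0 < e^-1 by rewrite invr_gt0.
have h := archi_boundP (ltW ei).
move: (Num.bound (e^-1)) h => b h; exists b.
rewrite /rad -[e]invrK ltf_pV2 ?posrE ?invr_gt0 ?ltr0n //.
by apply: lt_trans h _; rewrite ltr_nat.
Qed.

Lemma rad_zero (c : Rdefinitions.R) : 0 <= c -> (forall q, c <= rad q) -> c = 0.
Proof.
move=> c0 h; apply/eqP; rewrite eq_le c0 andbT; apply/negP => /negP; rewrite -ltNge => cp.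
have [q hq] := rad_small cp; have := h q; lra.
Qed.

Lemma coord_cont (i : nat) : continuous (fun x : X => x i).
Proof. exact: (@proj_continuous nat (fun _ => G) i). Qed.

Lemma X_hausdorff : hausdorff_space X.
Proof. exact: (@hausdorff_product nat (fun _ => G) (fun _ => G_hausdorff)). Qed.

Lemma filter_forall_lt (T : Type) (F : set_system T) (Q : nat -> set T) k :
  Filter F -> (forall i, (i < k)%N -> F (Q i)) ->
  F [set y | forall i, (i < k)%N -> Q i y].
Proof.
move=> FF; elim: k => [|k IH] h.
  by apply: filterS filterT => y _ i.
have h1 := IH (fun i ik => h i (ltnW ik)).
apply: (filterS _ (filterI h1 (h k (ltnSn k)))) => y [hy1 hy2] i.
by rewrite ltnS leq_eqVlt => /orP[/eqP ->//|]; exact: hy1.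
Qed.

Definition box := (nat * seq nat)%type.

Definition cbox (k : nat) (b : box) : set X :=
  [set x | (forall i, (i < k)%N -> d (enum_D (nth 0%N b.2 i)) (x i) <= rad b.1) /\
           (forall i, (k <= i)%N -> x i = one)].
Definition obox (k : nat) (b : box) : set X :=
  [set x | forall i, (i < k)%N -> d (enum_D (nth 0%N b.2 i)) (x i) < rad b.1].
Definition uset (k : nat) (u : seq box) : set X :=
  [set x | exists2 b, b \in u & cbox k b x].

Lemma obox_open k b : open (obox k b).
Proof.
rewrite openE => x xb; rewrite /interior.
apply: filter_forall_lt => i ik.
have : nbhs (x i) [set g | d (enum_D (nth 0%N b.2 i)) g < rad b.1].
  by apply: open_nbhs_nbhs; split; [exact: ball_open|exact: xb].
exact: coord_cont.
Qed.

Lemma cbox_compact k b :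
  (forall i, (i < k)%N -> compact [set g | d (enum_D (nth 0%N b.2 i)) g <= rad b.1]) ->
  compact (cbox k b).
Proof.
move=> h.
pose A := fun i : nat => if (i < k)%N then [set g | d (enum_D (nth 0%N b.2 i)) g <= rad b.1]
                         else [set one].
have -> : cbox k b = [set f : nat -> G | forall i, A i (f i)].
  rewrite /A; apply/seteqP; split => x /=.
    move=> [h1 h2] i; case: ifP => ik; first exact: h1.
    by apply: h2; rewrite leqNgt ik.
  move=> hx; split => i ik; first by have := hx i; rewrite ik.
  by have := hx i; rewrite ltnNge ik.
apply: (@tychonoff nat (fun _ => G)) => i; rewrite /A; case: ifP => ik.
  exact: h.
exact: compact_set1.
Qed.

Lemma uset_compact k u : (forall b, b \in u -> compact (cbox k b)) -> compact (uset k u).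
Proof.
elim: u => [|b u IH] h.
  have -> : uset k [::] = set0 by apply/seteqP; split => x // [].
  exact: compact0.
have -> : uset k (b :: u) = cbox k b `|` uset k u.
  apply/seteqP; split => x /=.
    by move=> [c]; rewrite inE => /orP[/eqP ->|cu] hx; [left|right; exists c].
  by case=> [hx|[c cu hx]]; [exists b; rewrite ?inE ?eqxx|exists c; rewrite ?inE ?cu ?orbT].
apply: compactU; first by apply: h; rewrite inE eqxx.
by apply: IH => c cu; apply: h; rewrite inE cu orbT.
Qed.

Lemma lc_q (x : G) : exists q : nat, forall (q' : nat) (c : G), (q <= q')%N -> d x c < rad q' ->
  compact [set g | d c g <= rad q'].
Proof.
have [K [nK cK]] := HLC x.
have [e e0 sK] := nbhs_ball nK.
have e2 : 0 < e / 2 by lra.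
have [q hq] := rad_small e2.
exists q => q' c qq' xc.
apply: (@subclosed_compact G _ K (@cball_closed c (rad q')) cK) => y /= cy; apply: sK => /=.
have := dtri x c y; have := rad_le qq'; lra.
Qed.

Lemma approx (L : set X) (k l : nat) : compact L ->
  (forall x, L x -> forall i, (k <= i)%N -> x i = one) ->
  exists u : seq box, [/\ L `<=` uset k u, compact (uset k u) &
   forall y, uset k u y -> exists2 x, L x &
     forall i, (i < k)%N -> d (x i) (y i) <= rad l + rad l].
Proof.
move=> cL tL.
pose Good := [set b : box |
  (forall i, (i < k)%N -> compact [set g | d (enum_D (nth 0%N b.2 i)) g <= rad b.1]) /\
  (forall y, cbox k b y -> exists2 x, L x &
     forall i, (i < k)%N -> d (x i) (y i) <= rad l + rad l)].
have cov : L `<=` cover Good (obox k).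
  move=> x Lx.
  have [qf hqf] := choice (fun i => lc_q (x i)).
  pose q := maxn l (\max_(i < k) qf i).
  have qfq : forall i, (i < k)%N -> (qf i <= q)%N.
    move=> i ik; apply: leq_trans (leq_maxr l _); rewrite /=.
    by have := @leq_bigmax _ (fun j : 'I_k => qf (nat_of_ord j)) (Ordinal ik); apply.
  have [af haf] := choice (fun i => dense_enum (x i) (rad_gt0 q)).
  pose b : box := (q, [seq af i | i <- iota 0 k]).
  have nb : forall i, (i < k)%N -> nth 0%N b.2 i = af i.
    by move=> i ik; rewrite /= (nth_map 0%N) ?size_iota // nth_iota.
  exists b.
    split.
      move=> i ik; rewrite nb //; apply: (hqf i) => //; exact: qfq.
    move=> y [hy1 hy2]; exists x => // i ik.
    have := dtri (x i) (enum_D (af i)) (y i); have := haf i; have := hy1 i ik; rewrite nb //.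
    have := rad_le (leq_maxl l (\max_(i < k) qf i)); rewrite -/q; lra.
  by move=> i ik; rewrite /= nb // dsym; exact: haf.
have [D' sD' cD'] := compact_cover_gen cL (fun b _ => obox_open k b) cov.
exists (finmap.enum_fset D'); split.
- move=> x Lx; have [b Db xb] := cD' x Lx; exists b; first exact: Db.
  by split; [move=> i ik; apply: ltW; exact: xb|exact: tL].
- apply: uset_compact => b bD; have /set_mem [h _] := sD' b bD.
  exact: cbox_compact.
- by move=> y [b bD yb]; have /set_mem [_ h] := sD' b bD; exact: h.
Qed.

Lemma closed_pre (S T : topologicalType) (f : S -> T) (A : set T) :
  continuous f -> closed A -> closed (f @^-1` A).
Proof.
move=> fc cA; rewrite -openC.
have -> : ~` (f @^-1` A) = f @^-1` (~` A) by rewrite preimage_setC.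
by apply: (proj1 (continuousP f)) fc _ _; rewrite openC.
Qed.

Definition P (k : nat) (x : X) : X := fun i => if (i < k)%N then x i else one.

Lemma P_cont k : continuous (P k).
Proof.
apply: cont_into_prod => i; case: (boolP (i < k)%N) => ik.
  have -> : (fun x => P k x i) = (fun x : X => x i).
    by apply: functional_extensionality_dep => x; rewrite /P ik.
  exact: coord_cont.
have -> : (fun x => P k x i) = (fun _ : X => one).
  by apply: functional_extensionality_dep => x; rewrite /P (negbTE ik).
exact: cst_continuous.
Qed.

Lemma P_weval k m (t : 'I_m -> X) (w : gword m) :
  P k (weval (Gw_mul mul) (Gw_inv inv) t w) = weval (Gw_mul mul) (Gw_inv inv) (P k \o t) w.
Proof.
apply: functional_extensionality_dep => i.
rewrite !weval_coord /P /comp /=; case: ifP => _; [by rewrite weval_coord|by rewrite weval_one].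
Qed.

Definition Ew m (w : gword m) (t : prod_topology (fun _ : 'I_m => X)) : X :=
  weval (Gw_mul mul) (Gw_inv inv) t w.

Lemma Ew_cont m (w : gword m) : continuous (@Ew m w).
Proof.
apply: cont_into_prod => n.
have -> : (fun t => Ew w t n) = (fun t : prod_topology (fun _ : 'I_m => X) =>
     weval mul inv (fun i => t i n) w).
  by apply: functional_extensionality_dep => t; rewrite /Ew weval_coord.
elim: w => [i|w1 IH1 w2 IH2|w1 IH1] /= t.
- apply: (@continuous_comp _ _ _ (fun t : prod_topology (fun _ : 'I_m => X) => t i)
     (fun x : X => x n)); last exact: coord_cont.
  exact: (@proj_continuous 'I_m (fun _ => X) i).
- apply: (@continuous_comp _ _ _
     (fun t : prod_topology (fun _ : 'I_m => X) =>
        (weval mul inv (fun i => t i n) w1, weval mul inv (fun i => t i n) w2))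
     (fun p : G * G => mul p.1 p.2)); last exact: Hmul.
  by apply: cvg_pair; (try exact: IH1); (try exact: IH2); exact: nbhs_filter.
- apply: (@continuous_comp _ _ _
     (fun t : prod_topology (fun _ : 'I_m => X) => weval mul inv (fun i => t i n) w1)
     inv); last exact: Hinv.
  exact: IH1.
Qed.

Lemma Y_hausdorff m : hausdorff_space (prod_topology (fun _ : 'I_m => X)).
Proof. exact: (@hausdorff_product 'I_m (fun _ => X) (fun _ => X_hausdorff)). Qed.

Lemma Ypow_compact m (C : set X) : compact C ->
  compact [set t : prod_topology (fun _ : 'I_m => X) | forall i, C (t i)].
Proof. move=> cC; exact: (@tychonoff 'I_m (fun _ => X) (fun _ => C)). Qed.

Lemma X_set1_closed (y : X) : closed [set y].
Proof. apply: compact_closed; [exact: X_hausdorff|exact: compact_set1]. Qed.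

Notation WI := (wimage (Gw_mul mul) (Gw_inv inv)).

Lemma wimage_decr m (w : gword m) (C : nat -> set X) (y : X) :
  (forall j, compact (C j)) -> (forall j, C j.+1 `<=` C j) ->
  (forall j, WI w (C j) y) -> WI w (\bigcap_j C j) y.
Proof.
move=> cC dC hy.
have dec : forall j, C j `<=` C 0.
  elim=> [|j IH] //; exact: subset_trans (dC j) IH.
pose S := fun j => [set t : prod_topology (fun _ : 'I_m => X) | forall i, C j (t i)] `&`
                   (@Ew m w @^-1` [set y]).
have : exists t, [set t : prod_topology (fun _ : 'I_m => X) | forall i, C 0 (t i)] t /\ forall j, S j t.
  apply: fip_dec; first exact: (@Ypow_compact m _ (cC 0)).
- move=> j; apply: closedI.
    apply: compact_closed; [exact: Y_hausdorff|exact: Ypow_compact].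
  apply: closed_pre; [exact: Ew_cont|exact: X_set1_closed].
- by move=> j t [h1 h2]; split => // i; apply: dC.
- move=> j; have [t [ht hyt]] := hy j; exists t; split; first by move=> i; apply: dec.
  by split => //=; rewrite /Ew -hyt.
move=> [t [_ ht]].
exists t; split; last by have [_ <-] := ht 0%N.
by move=> i j _; have [h _] := ht j; exact: h.
Qed.

Lemma wimage_proj m (w : gword m) (K : set X) (x : X) : compact K ->
  (forall k, WI w (P k @` K) (P k x)) -> WI w K x.
Proof.
move=> cK hx.
pose S := fun k => [set t : prod_topology (fun _ : 'I_m => X) | forall i, K (t i)] `&`
                   ((P k \o @Ew m w) @^-1` [set P k x]).
have : exists t, [set t : prod_topology (fun _ : 'I_m => X) | forall i, K (t i)] t /\ forall j, S j t.
  apply: fip_dec; first exact: (@Ypow_compact m _ cK).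
- move=> k; apply: closedI.
    apply: compact_closed; [exact: Y_hausdorff|exact: Ypow_compact].
  apply: closed_pre; last exact: X_set1_closed.
  move=> t; apply: continuous_comp; [exact: Ew_cont|exact: P_cont].
- move=> k t [h1 h2]; split => //; move: h2; rewrite /= => h2.
  apply: functional_extensionality_dep => i.
  have := congr1 (fun z : X => z i) h2; rewrite /P.
  case: (boolP (i < k)%N) => ik /=; last by [].
  by rewrite ltnS (ltnW ik).
- move=> k; have [s [hs hsx]] := hx k.
  have hs' : forall i, exists a, K a /\ P k a = s i.
    by move=> i; have [a ? ?] := hs i; exists a.
  have [t ht] := choice hs'.
  exists t; split; first by move=> i; have [] := ht i.
  split; first by move=> i; have [] := ht i.
  rewrite /= /Ew P_weval hsx; congr weval.
  by apply: functional_extensionality_dep => i /=; have [_ ->] := ht i.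
move=> [t [Kt ht]].
exists t; split => //.
apply: functional_extensionality_dep => n.
have [_ h] := ht n.+1; have := congr1 (fun z : X => z n) h; rewrite /P /= ltnSn.
by [].
Qed.

Definition desc := (nat * seq (seq box))%type.
Definition iset (k : nat) (s : seq (seq box)) : set X :=
  [set x | forall u, u \in s -> uset k u x].
Definition oneX : X := Gw_one one.

Definition Fam (n : nat) : set X :=
  match @unpickle desc n with
  | Some s => if `[< compact (iset s.1 s.2) /\ iset s.1 s.2 oneX >]
              then iset s.1 s.2 else [set oneX]
  | None => [set oneX]
  end.
Definition kidx (n : nat) : nat :=
  match @unpickle desc n with Some s => s.1 | None => 0%N end.

Lemma Fam_compact n : compact (Fam n).
Proof.
rewrite /Fam; case: (unpickle n) => [s|]; last exact: compact_set1.
by case: asboolP => [[c1 c2]|nP]; [exact: c1|exact: compact_set1].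
Qed.

Lemma Fam_one n : Fam n oneX.
Proof.
rewrite /Fam; case: (unpickle n) => [s|] //.
by case: asboolP => [[c1 c2]|nP].
Qed.

Lemma Fam_pickle (s : desc) : compact (iset s.1 s.2) -> iset s.1 s.2 oneX ->
  Fam (pickle s) = iset s.1 s.2.
Proof. by move=> h1 h2; rewrite /Fam pickleK asboolT. Qed.

Lemma kidx_pickle (s : desc) : kidx (pickle s) = s.1.
Proof. by rewrite /kidx pickleK. Qed.

Lemma iset_iota k (f : nat -> seq box) j y :
  iset k [seq f l | l <- iota 0 j.+1] y <-> forall l, (l <= j)%N -> uset k (f l) y.
Proof.
split.
  move=> h l lj; apply: h; apply/mapP; exists l => //.
  by rewrite mem_iota add0n ltnS lj.
move=> h u /mapP [l]; rewrite mem_iota add0n ltnS => /andP[_ lj] ->; exact: h.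
Qed.

Definition blk (n : nat) (y : X) : X := fun j => y (Cantor.to_nat (n, j)).
Definition unb (z : prod_topology (fun _ : nat => X)) : X :=
  fun p => z (Cantor.of_nat p).1 (Cantor.of_nat p).2.

Lemma blk_unb n z : blk n (unb z) = z n.
Proof.
by apply: functional_extensionality_dep => j; rewrite /blk /unb Cantor.cancel_of_to.
Qed.

Lemma unb_blk (y : X) : unb (fun n => blk n y) = y.
Proof.
apply: functional_extensionality_dep => p; rewrite /blk /unb.
have -> : ((Cantor.of_nat p).1, (Cantor.of_nat p).2) = Cantor.of_nat p.
  by case: (Cantor.of_nat p).
by rewrite Cantor.cancel_to_of.
Qed.

Lemma unb_cont : continuous unb.
Proof.
apply: cont_into_prod => p z.
apply: (@continuous_comp _ _ _ (fun z : prod_topology (fun _ : nat => X) => z (Cantor.of_nat p).1)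
   (fun x : X => x (Cantor.of_nat p).2)); last exact: coord_cont.
exact: (@proj_continuous nat (fun _ => X) (Cantor.of_nat p).1).
Qed.

Lemma blk_weval n m (t : 'I_m -> X) (w : gword m) :
  blk n (weval (Gw_mul mul) (Gw_inv inv) t w) = weval (Gw_mul mul) (Gw_inv inv) (blk n \o t) w.
Proof.
apply: functional_extensionality_dep => j; by rewrite /blk !weval_coord.
Qed.

Lemma weval_oneX m (w : gword m) : weval (Gw_mul mul) (Gw_inv inv) (fun _ => oneX) w = oneX.
Proof.
apply: functional_extensionality_dep => j; by rewrite weval_coord weval_one.
Qed.

Definition K0 : set X := unb @` [set z : prod_topology (fun _ : nat => X) | forall n, Fam n (z n)].

Lemma K0_compact : compact K0.
Proof.
apply: continuous_compact; first exact/continuous_subspaceT/unb_cont.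
exact: (@tychonoff nat (fun _ => X) Fam Fam_compact).
Qed.

Lemma K0E y : K0 y <-> forall n, Fam n (blk n y).
Proof.
split; first by move=> [z hz <-] n; rewrite blk_unb.
by move=> h; exists (fun n => blk n y) => //; rewrite unb_blk.
Qed.

Lemma K0_one : K0 oneX.
Proof. by apply/K0E => n; exact: Fam_one. Qed.

Lemma WI_K0 m (w : gword m) y : WI w K0 y <-> forall n, WI w (Fam n) (blk n y).
Proof.
split.
  move=> [t [ht ->]] n; exists (blk n \o t); split; last by rewrite blk_weval.
  by move=> i; have /K0E := ht i; apply.
move=> h; have [tf htf] := choice h.
exists (fun i => unb (fun n => tf n i)); split.
  by move=> i; apply/K0E => n; rewrite blk_unb; have [] := htf n.
rewrite -[LHS]unb_blk; apply: functional_extensionality_dep => p.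
rewrite /unb weval_coord.
have [_ ->] := htf (Cantor.of_nat p).1; rewrite weval_coord.
by [].
Qed.

Lemma rad_zero2 (cc : Rdefinitions.R) : 0 <= cc -> (forall q, cc <= rad q + rad q) -> cc = 0.
Proof.
move=> c0 h; apply/eqP; rewrite eq_le c0 andbT; apply/negP => /negP; rewrite -ltNge => cp.
have c2 : 0 < cc / 2 by lra.
have [q hq] := rad_small c2; have := h q; lra.
Qed.

Lemma main_phi (K : set X) : compact K -> K oneX ->
  exists phi : X -> X, [/\ continuous phi, group_hom (Gw_mul mul) (Gw_mul mul) phi,
     phi oneX = oneX, (forall x, phi (Gw_inv inv x) = Gw_inv inv (phi x)) &
     forall m (w : gword m), phi @^-1` (WI w K0) = WI w K].
Proof.
move=> cK K1.
have cL : forall k, compact (P k @` K).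
  move=> k; apply: continuous_compact; [exact/continuous_subspaceT/P_cont|exact: cK].
have tL : forall k x, (P k @` K) x -> forall i, (k <= i)%N -> x i = one.
  by move=> k x [y _ <-] i ki; rewrite /P ltnNge ki.
have H : forall k l, exists u : seq box, [/\ P k @` K `<=` uset k u, compact (uset k u) &
    forall y, uset k u y -> exists2 x, (P k @` K) x &
      forall i, (i < k)%N -> d (x i) (y i) <= rad l + rad l].
  by move=> k l; apply: approx; [exact: cL|exact: tL].
have H' : forall k, exists f : nat -> seq box, forall l, [/\ P k @` K `<=` uset k (f l),
    compact (uset k (f l)) & forall y, uset k (f l) y -> exists2 x, (P k @` K) x &
      forall i, (i < k)%N -> d (x i) (y i) <= rad l + rad l].
  by move=> k; have [f hf] := choice (H k); exists f.
have [uf huf] := choice H'.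
pose sg := fun k j => ((k, [seq uf k l | l <- iota 0 j.+1]) : desc).
have isE : forall k j y, iset (sg k j).1 (sg k j).2 y <->
    forall l, (l <= j)%N -> uset k (uf k l) y.
  by move=> k j y; exact: iset_iota.
have ucomp : forall k l, compact (uset k (uf k l)) by move=> k l; have [] := huf k l.
have uL : forall k l, P k @` K `<=` uset k (uf k l) by move=> k l; have [] := huf k l.
have sgc : forall k j, compact (iset (sg k j).1 (sg k j).2).
  move=> k j.
  have -> : iset (sg k j).1 (sg k j).2 =
      uset k (uf k 0%N) `&` \bigcap_(l in [set l | (l <= j)%N]) uset k (uf k l).
    apply/seteqP; split => y.
      by move/isE => h; split; [exact: h|move=> l lj; exact: h].
    by move=> [_ h]; apply/isE => l lj; exact: h.
  apply: compact_closedI; first exact: ucomp.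
  apply: closed_bigI => l _; apply: compact_closed; [exact: X_hausdorff|exact: ucomp].
have sg1 : forall k j, iset (sg k j).1 (sg k j).2 oneX.
  move=> k j; apply/isE => l _; apply: uL; exists oneX => //.
  by apply: functional_extensionality_dep => i; rewrite /P /oneX /Gw_one; case: ifP.
pose c := fun k j => pickle (sg k j).
have Fc : forall k j, Fam (c k j) = iset (sg k j).1 (sg k j).2.
  by move=> k j; exact: Fam_pickle.
have kc : forall k j, kidx (c k j) = k by move=> k j; exact: kidx_pickle.
have capE : forall k, \bigcap_j Fam (c k j) = P k @` K.
  move=> k; apply/seteqP; split => y; last first.
    by move=> Ly j _; rewrite Fc; apply/isE => l _; exact: uL.
  move=> hy.
  have hy' : forall l, exists2 x, (P k @` K) x &
      forall i, (i < k)%N -> d (x i) (y i) <= rad l + rad l.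
    move=> l; have [_ _ h] := huf k l; apply: h.
    have := hy l I; rewrite Fc => /isE; apply; exact: leqnn.
  have [x [Lx hx]] : exists x, (P k @` K) x /\ forall l,
      [set x : X | forall i, (i < k)%N -> d (x i) (y i) <= rad l + rad l] x.
    apply: fip_dec; first exact: cL.
    - move=> l.
      have -> : [set x : X | forall i, (i < k)%N -> d (x i) (y i) <= rad l + rad l] =
          \bigcap_(i in [set i | (i < k)%N])
             ((fun x : X => x i) @^-1` [set g | d (y i) g <= rad l + rad l]).
        by apply/seteqP; split => x /= h i ik /=; rewrite dsym; apply: h.
      apply: closed_bigI => i _; apply: closed_pre; [exact: coord_cont|exact: cball_closed].
    - move=> l x hx i ik; have := hx i ik; have := rad_le (leqnSn l); lra.
    - by move=> l; have [x Lx hx] := hy' l; exists x.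
  have tagy : forall i, (k <= i)%N -> y i = one.
    have := hy 0%N I; rewrite Fc => /isE /(_ 0%N (leqnn 0)) [b _ [_ hb]]; exact: hb.
  suff -> : y = x by [].
  apply: functional_extensionality_dep => i; case: (ltnP i k) => ik.
    apply/esym/deq; apply: rad_zero2; first exact: d0.
    by move=> q; exact: hx.
  by rewrite (tagy i ik) (tL k x Lx i ik).
pose chosen := fun n => exists j, c (kidx n) j = n.
pose al := fun n (x : X) => if `[< chosen n >] then P (kidx n) x else oneX.
exists (fun x => unb (fun n => al n x)); split.
- apply: cont_into_prod => p; rewrite /unb /al.
  case: asboolP => _; last exact: cst_continuous.
  move=> x; apply: (@continuous_comp _ _ _ (P (kidx (Cantor.of_nat p).1))
     (fun z : X => z (Cantor.of_nat p).2)); [exact: P_cont|exact: coord_cont].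
- move=> x y; apply: functional_extensionality_dep => p; rewrite /unb /Gw_mul /al.
  case: asboolP => _; rewrite /P /oneX /Gw_one; last by rewrite mul11.
  by case: ifP => _ //; rewrite mul11.
- apply: functional_extensionality_dep => p; rewrite /unb /al.
  case: asboolP => _ //; rewrite /P /oneX /Gw_one; by case: ifP.
- move=> x; apply: functional_extensionality_dep => p; rewrite /unb /Gw_inv /al.
  case: asboolP => _; rewrite /P /oneX /Gw_one; last by rewrite inv1.
  by case: ifP => _ //; rewrite inv1.
- move=> m w; apply/seteqP; split => x.
    move=> /= /WI_K0 h.
    apply: (wimage_proj cK) => k; rewrite -capE; apply: wimage_decr.
    + move=> j; exact: Fam_compact.
    + move=> j; rewrite !Fc => y /isE h'; apply/isE => l lj; apply: h'; exact: leqW.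
    + move=> j; have := h (c k j); rewrite blk_unb /al asboolT ?kc //.
      by exists j; rewrite kc.
  move=> [t [Kt ->]] /=; apply/WI_K0 => n; rewrite blk_unb /al.
  case: asboolP => [[j cj]|_].
    rewrite P_weval; exists (P (kidx n) \o t); split => // i.
    move: cj; set k := kidx n => cj.
    rewrite -cj Fc; apply/isE => l _; apply: uL; by exists (t i).
  exists (fun _ => oneX); split; [move=> i; exact: Fam_one|by rewrite weval_oneX].
Qed.

Notation GS := (gen_subgroup (Gw_mul mul) (Gw_inv inv) oneX).
Notation SUB := (is_subgroup (Gw_mul mul) (Gw_inv inv) oneX).

Lemma GS_sub (A : set X) : SUB (GS A).
Proof.
split.
- by move=> H [] h1 _ _ _.
- by move=> x y hx hy H sH AH; case: (sH) => _ h2 _; apply: h2; [exact: hx|exact: hy].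
- by move=> x hx H sH AH; case: (sH) => _ _ h3; apply: h3; exact: hx.
Qed.

Lemma GS_incl (A : set X) : A `<=` GS A.
Proof. by move=> x Ax H _ AH; exact: AH. Qed.

Lemma sub_weval (H : set X) m (w : gword m) (t : 'I_m -> X) : SUB H ->
  (forall i, H (t i)) -> H (weval (Gw_mul mul) (Gw_inv inv) t w).
Proof.
move=> [h1 h2 h3] ht; elim: w => [i|w1 IH1 w2 IH2|w1 IH1] /=.
- exact: ht.
- exact: h2.
- exact: h3.
Qed.

Lemma WI_GS (A : set X) m (w : gword m) : WI w A `<=` GS A.
Proof.
move=> y [t [ht ->]]; apply: sub_weval; first exact: GS_sub.
by move=> i; apply: GS_incl.
Qed.

Lemma GS_K0 : GS K0 `<=` [set y | exists m (w : gword m), WI w K0 y].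
Proof.
move=> y; apply.
  split.
  - exists 1%N, (GVar ord0); exists (fun _ => oneX); split => //; move=> i; exact: K0_one.
  - move=> y1 y2 [m1 [w1 [t1 [ht1 ->]]]] [m2 [w2 [t2 [ht2 ->]]]].
    exists (m1 + m2)%N, (GMul (wmap (@lshift m1 m2) w1) (wmap (@rshift m1 m2) w2)).
    pose t := fun i : 'I_(m1 + m2) =>
      match fintype.split i with inl a => t1 a | inr b => t2 b end.
    exists t; split; first by move=> i; rewrite /t; case: (fintype.split i).
    have e1 : t \o @lshift m1 m2 = t1.
      by apply: functional_extensionality_dep => a; rewrite /t /= (unsplitK (inl a)).
    have e2 : t \o @rshift m1 m2 = t2.
      by apply: functional_extensionality_dep => a; rewrite /t /= (unsplitK (inr a)).
    by rewrite /= !weval_wmap e1 e2.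
  - move=> y1 [m1 [w1 [t1 [ht1 ->]]]]; exists m1, (GInv w1), t1; split => //.
move=> x Kx; exists 1%N, (GVar ord0); exists (fun _ => x); split => //.
Qed.

Lemma final_stmt : exists K0 : set X,
    [/\ compact K0, K0 (Gw_one one),
        (forall K : set X, compact K -> K (Gw_one one) ->
           exists phi : X -> X,
             [/\ continuous phi, group_hom (Gw_mul mul) (Gw_mul mul) phi &
                 forall (m : nat) (w : gword m),
                   phi @^-1` (WI w K0) = WI w K])
      & (forall K : set X, compact K ->
           exists psi : X -> X,
             [/\ continuous psi, group_hom (Gw_mul mul) (Gw_mul mul) psi &
                 psi @^-1` (GS K0) = GS K])].
Proof.
exists K0; split.
- exact: K0_compact.
- exact: K0_one.
- move=> K cK K1; have [phi [h1 h2 _ _ h5]] := main_phi cK K1.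
  by exists phi; split.
move=> K cK.
have cK' : compact (K `|` [set oneX]) by apply: compactU => //; exact: compact_set1.
have K'1 : (K `|` [set oneX]) oneX by right.
have [phi [h1 h2 h3 h4 h5]] := main_phi cK' K'1.
exists phi; split => //.
apply/seteqP; split => x.
  move=> /= /GS_K0 [m [w hw]].
  have : WI w (K `|` [set oneX]) x by rewrite -h5.
  move=> [t [ht ->]]; apply: sub_weval; first exact: GS_sub.
  move=> i; case: (ht i) => [Kt|->]; first exact: GS_incl.
  by case: (GS_sub K).
move=> hx; apply: hx.
  split.
  - by rewrite /= h3; case: (GS_sub K0).
  - by move=> a b ha hb; rewrite /= h2; case: (GS_sub K0) => _ g _; exact: g.
  - by move=> a ha; rewrite /= h4; case: (GS_sub K0) => _ _ g; exact: g.
move=> a Ka.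
have : WI (GVar (ord0 : 'I_1)) (K `|` [set oneX]) a.
  by exists (fun _ => a); split => //; move=> i; left.
rewrite -h5 => -[t [ht hpa]]; change (GS K0 (phi a)); rewrite hpa /=.
apply: GS_incl; exact: ht.
Qed.
End Main.

Unset Implicit Arguments.

Theorem mainTheorem19 (G : topologicalType) (mul : G -> G -> G) (inv : G -> G)
    (one : G) :
  topological_group mul inv one ->
  locally_compact_space G ->
  polish_space G ->
  exists K0 : set (Gomega G),
    [/\ compact K0, K0 (Gw_one one),
        (forall K : set (Gomega G), compact K -> K (Gw_one one) ->
           exists phi : Gomega G -> Gomega G,
             [/\ continuous phi, group_hom (Gw_mul mul) (Gw_mul mul) phi &
                 forall (m : nat) (w : gword m),
                   phi @^-1` (wimage (Gw_mul mul) (Gw_inv inv) w K0)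
                   = wimage (Gw_mul mul) (Gw_inv inv) w K])
      & (forall K : set (Gomega G), compact K ->
           exists psi : Gomega G -> Gomega G,
             [/\ continuous psi, group_hom (Gw_mul mul) (Gw_mul mul) psi &
                 psi @^-1` (gen_subgroup (Gw_mul mul) (Gw_inv inv) (Gw_one one) K0)
                 = gen_subgroup (Gw_mul mul) (Gw_inv inv) (Gw_one one) K])].
Proof.
move=> [Hg Hm Hi] HLC [[D [Dc Dd]] [d Hd]].
exact: (@final_stmt G mul inv one Hg Hm Hi d Hd HLC D Dc Dd).
Qed.
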